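(* There is a formula $\phi_{\subseteq}(X_l,X_r,Y_l,Y_r)$ in the signature of $\mathcal{W}(I)$ such that for all $A,B\in\mathcal{P}_{\mathrm{fci}}(I)$, $$A\subseteq B\iff \mathcal{W}(I)\models\phi_{\subseteq}(l(A),r(A),l(B),r(B)).$$
   Context: Let $I$ be a dense linear order with left endpoint $0$ and no right endpoint. Let $\mathcal{P}_{\mathrm{fci}}(I)$ be the set of finite unions of closed intervals $[i,j]$, $[i,+\infty)$, $(-\infty,j]$ of $I$. For $A\in\mathcal{P}_{\mathrm{fci}}(I)$, $l(A)$ and $r(A)$ are the finite sets of left and right endpoints of $A$. Left endpoints are the minima of the maximal closed intervals composing $A$, and right endpoints are the maxima of the bounded ones. $\mathcal{W}(I)$ has universe the finite subsets of $I$ and signature $\{\cup,\cap,\bot,c_0,\min,\max,\mathrm{ips}\}$, interpreted as follows. - $\cup$ and $\cap$ are union and intersection. - $\bot$ is $\emptyset$, and $c_0$ is $\{0\}$. - $\min$ and $\max$ send a nonempty set to the singleton of its minimum, respectively maximum, and fix $\emptyset$. - $\mathrm{ips}(A,B)=\{i\in A: s_A(i)\in B\}$, where $s_A$ is the successor function of $A$. *)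

(* Defs.v *)
From Stdlib Require Import List Arith.
Import ListNotations.

Definition pset (T : Type) := T -> Prop.

Section Defs.
Variable T : Type.
Variable lt : T -> T -> Prop.
Variable zero : T.

Definition le (x y : T) : Prop := lt x y \/ x = y.

Definition is_dlo0 : Prop :=
  (forall x, ~ lt x x) /\
  (forall x y z, lt x y -> lt y z -> lt x z) /\
  (forall x y, lt x y \/ x = y \/ lt y x) /\
  (forall x y, lt x y -> exists z, lt x z /\ lt z y) /\
  (forall x, le zero x) /\
  (forall x, exists y, lt x y).

Definition seteq (A B : pset T) : Prop := forall x, A x <-> B x.
Definition subset (A B : pset T) : Prop := forall x, A x -> B x.
Definition finite (A : pset T) : Prop := exists l : list T, forall x, A x <-> In x l.

Definition s_union (A B : pset T) : pset T := fun x => A x \/ B x.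
Definition s_inter (A B : pset T) : pset T := fun x => A x /\ B x.
Definition s_bot : pset T := fun _ => False.
Definition s_c0 : pset T := fun x => x = zero.
(* {min A} if A nonempty, empty otherwise *)
Definition s_min (A : pset T) : pset T := fun x => A x /\ forall y, A y -> le x y.
Definition s_max (A : pset T) : pset T := fun x => A x /\ forall y, A y -> le y x.
Definition succ_in (A : pset T) (i j : T) : Prop :=
  A j /\ lt i j /\ forall k, A k -> lt i k -> le j k.
Definition s_ips (A B : pset T) : pset T :=
  fun i => A i /\ exists j, succ_in A i j /\ B j.

End Defs.
Arguments s_union {T}. Arguments s_inter {T}. Arguments s_c0 {T}. Arguments s_min {T}. Arguments s_max {T}. Arguments s_ips {T}. Arguments seteq {T}. Arguments subset {T}. Arguments finite {T}. Arguments le {T}. Arguments is_dlo0 {T}. Arguments succ_in {T}.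

Inductive term : Type :=
| TVar (n : nat)
| TUnion (t u : term)
| TInter (t u : term)
| TBot
| TC0
| TMin (t : term)
| TMax (t : term)
| TIps (t u : term).

Inductive form : Type :=
| FEq (t u : term)
| FTrue
| FFalse
| FNot (f : form)
| FAnd (f g : form)
| FOr (f g : form)
| FImp (f g : form)
| FAll (n : nat) (f : form)
| FEx (n : nat) (f : form).

Section Sem.
Variable T : Type.
Variable lt : T -> T -> Prop.
Variable zero : T.

Definition env := nat -> pset T.
Definition upd (e : env) (n : nat) (X : pset T) : env :=
  fun m => if Nat.eqb m n then X else e m.

Fixpoint teval (e : env) (t : term) : pset T :=
  match t with
  | TVar n => e n
  | TUnion t u => s_union (teval e t) (teval e u)
  | TInter t u => s_inter (teval e t) (teval e u)
  | TBot => s_bot T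
  | TC0 => s_c0 zero
  | TMin t => s_min lt (teval e t)
  | TMax t => s_max lt (teval e t)
  | TIps t u => s_ips lt (teval e t) (teval e u)
  end.

Fixpoint sat (e : env) (f : form) : Prop :=
  match f with
  | FEq t u => seteq (teval e t) (teval e u)
  | FTrue => True
  | FFalse => False
  | FNot f => ~ sat e f
  | FAnd f g => sat e f /\ sat e g
  | FOr f g => sat e f \/ sat e g
  | FImp f g => sat e f -> sat e g
  | FAll n f => forall X, finite X -> sat (upd e n X) f
  | FEx n f => exists X, finite X /\ sat (upd e n X) f
  end.

Definition env4 (X0 X1 X2 X3 : pset T) : env :=
  fun n => match n with
           | 0 => X0 | 1 => X1 | 2 => X2 | 3 => X3 | _ => s_bot T end.

Inductive cint : Type :=
| CC (i j : T)   (* [i,j] *)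
| CR (i : T)     (* [i,+oo) *)
| CL (j : T).    (* (-oo,j] *)

Definition iset (c : cint) : pset T :=
  match c with
  | CC i j => fun x => le lt i x /\ le lt x j
  | CR i => fun x => le lt i x
  | CL j => fun x => le lt x j
  end.

Definition Pfci (A : pset T) : Prop :=
  exists cs : list cint, forall x, A x <-> Exists (fun c => iset c x) cs.

Definition closed_interval (J : pset T) : Prop :=
  exists c : cint,
    (match c with CC i j => le lt i j | _ => True end) /\ seteq J (iset c).

Definition max_cint (A J : pset T) : Prop :=
  closed_interval J /\ subset J A /\
  forall K, closed_interval K -> subset J K -> subset K A -> subset K J.

Definition lends (A : pset T) : pset T :=
  fun i => exists J, max_cint A J /\ J i /\ forall y, J y -> le lt i y.
Definition rends (A : pset T) : pset T :=
  fun j => exists J, max_cint A J /\ J j /\ forall y, J y -> le lt y j.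

End Sem.
Arguments teval {T}. Arguments sat {T}. Arguments env4 {T}. Arguments Pfci {T}. Arguments lends {T}. Arguments rends {T}. Arguments iset {T}. Arguments closed_interval {T}. Arguments max_cint {T}. Arguments upd {T}.

(* Main.v *)
Require Import Defs.
From Stdlib Require Import List Arith Classical.
Import ListNotations.

Section Pf.
Variable T : Type.
Variable lt : T -> T -> Prop.
Variable zero : T.
Hypothesis HI : is_dlo0 lt zero.

Local Notation le := (Defs.le lt).

Lemma irr x : ~ lt x x. Proof. destruct HI as [h _]; apply h. Qed.
Lemma tr x y z : lt x y -> lt y z -> lt x z. Proof. destruct HI as [_ [h _]]; apply h. Qed.
Lemma tri x y : lt x y \/ x = y \/ lt y x. Proof. destruct HI as [_ [_ [h _]]]; apply h. Qed.
Lemma zle x : le zero x. Proof. destruct HI as [_ [_ [_ [_ [h _]]]]]; apply h. Qed.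
Lemma le_refl x : le x x. Proof. right; reflexivity. Qed.
Lemma le_trans x y z : le x y -> le y z -> le x z.
Proof. unfold Defs.le; intros [h|h] [k|k]; subst; eauto using tr. Qed.
Lemma le_antisym x y : le x y -> le y x -> x = y.
Proof. unfold Defs.le; intros [h|h] [k|k]; subst; auto. exfalso; eapply irr, tr; eauto. Qed.
Lemma le_or_lt x y : le x y \/ lt y x.
Proof. unfold Defs.le; destruct (tri x y) as [h|[h|h]]; auto. Qed.
Lemma lt_le x y : lt x y -> le x y. Proof. left; auto. Qed.
Lemma lt_not_le x y : lt x y -> ~ le y x.
Proof. intros h [k|k]; subst. eapply irr, tr; eauto. eapply irr; eauto. Qed.

Lemma ci_conv J a b y : closed_interval lt J -> J a -> J b -> le a y -> le y b -> J y.
Proof.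
  intros [c [Hc Hs]] Ha Hb H1 H2. apply Hs. apply Hs in Ha. apply Hs in Hb.
  destruct c; simpl in *.
  - destruct Ha, Hb; split; [apply le_trans with a|apply le_trans with b]; auto.
  - apply le_trans with a; auto.
  - apply le_trans with b; auto.
Qed.

Lemma ci_min J : closed_interval lt J -> exists m, J m /\ forall y, J y -> le m y.
Proof.
  intros [c [Hc Hs]]. destruct c; simpl in *.
  - exists i. split. apply Hs; simpl; split; auto using le_refl.
    intros y Hy; apply Hs in Hy; apply Hy.
  - exists i. split. apply Hs; simpl; auto using le_refl. intros y Hy; apply Hs in Hy; apply Hy.
  - exists zero. split. apply Hs; simpl; apply zle. intros; apply zle.
Qed.

Definition lft (c : cint T) := match c with CC _ i _ => i | CR _ i => i | CL _ _ => zero end.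
Definition rgt (c : cint T) := match c with CC _ _ j => j | CR _ i => i | CL _ j => j end.
Definition seg (A : pset T) a b := forall y, le a y -> le y b -> A y.

Lemma list_min (P : T -> Prop) (E : list T) :
  (exists e, In e E /\ P e) -> exists m, In m E /\ P m /\ forall e, In e E -> P e -> le m e.
Proof.
  induction E as [|a E IH]; intros [e [He Pe]]; [destruct He|].
  destruct (classic (exists e, In e E /\ P e)) as [h|h].
  - destruct (IH h) as [m [Hm [Pm Hmin]]].
    destruct (classic (P a)) as [Pa|Pa].
    + destruct (le_or_lt a m) as [k|k].
      * exists a; split; [left; auto|split; auto].
        intros e' [<-|He'] Pe'; [apply le_refl|eapply le_trans; eauto].
      * exists m; split; [right; auto|split; auto].
        intros e' [<-|He'] Pe'; [apply lt_le; auto|auto].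
    + exists m; split; [right; auto|split; auto].
      intros e' [<-|He'] Pe'; [contradiction|auto].
  - destruct He as [->|He]; [|exfalso; apply h; eauto].
    exists e; split; [left; auto|split; auto].
    intros e' [<-|He'] Pe'; [apply le_refl|exfalso; apply h; eauto].
Qed.

Lemma list_max (P : T -> Prop) (E : list T) :
  (exists e, In e E /\ P e) -> exists m, In m E /\ P m /\ forall e, In e E -> P e -> le e m.
Proof.
  induction E as [|a E IH]; intros [e [He Pe]]; [destruct He|].
  destruct (classic (exists e, In e E /\ P e)) as [h|h].
  - destruct (IH h) as [m [Hm [Pm Hmin]]].
    destruct (classic (P a)) as [Pa|Pa].
    + destruct (le_or_lt m a) as [k|k].
      * exists a; split; [left; auto|split; auto].
        intros e' [<-|He'] Pe'; [apply le_refl|eapply le_trans; eauto].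
      * exists m; split; [right; auto|split; auto].
        intros e' [<-|He'] Pe'; [apply lt_le; auto|auto].
    + exists m; split; [right; auto|split; auto].
      intros e' [<-|He'] Pe'; [contradiction|auto].
  - destruct He as [->|He]; [|exfalso; apply h; eauto].
    exists e; split; [left; auto|split; auto].
    intros e' [<-|He'] Pe'; [apply le_refl|exfalso; apply h; eauto].
Qed.

Lemma iset_left c y : iset lt c y -> le (lft c) y /\ seg (iset lt c) (lft c) y.
Proof.
  destruct c; simpl; intros H.
  - split; [apply H|]. intros z H1 H2; split; auto. eapply le_trans; eauto. apply H.
  - split; auto. intros z H1 H2; auto.
  - split; [apply zle|]. intros z H1 H2; eapply le_trans; eauto.
Qed.

Lemma iset_right c y : iset lt c y -> (forall i, c <> CR T i) ->
  le y (rgt c) /\ seg (iset lt c) y (rgt c).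
Proof.
  destruct c; simpl; intros H Hn.
  - split; [apply H|]. intros z H1 H2; split; auto. eapply le_trans; eauto. apply H.
  - exfalso; eapply Hn; eauto.
  - split; auto. intros z H1 H2; auto.
Qed.

Lemma comp_exists A x : Pfci lt A -> A x -> exists J, max_cint lt A J /\ J x.
Proof.
  intros [cs Hcs] Hx.
  assert (HA : forall c y, In c cs -> iset lt c y -> A y).
  { intros c y Hc Hy. apply Hcs. apply Exists_exists. eauto. }
  assert (HA' : forall y, A y -> exists c, In c cs /\ iset lt c y).
  { intros y Hy. apply Hcs in Hy. apply Exists_exists in Hy. exact Hy. }
  destruct (HA' x Hx) as [c0 [Hc0 Hx0]].
  destruct (list_min (fun e => le e x /\ seg A e x) (map lft cs)) as [l [_ [[Hlx Hsl] Hlmin]]].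
  { exists (lft c0). split. apply in_map; auto.
    destruct (iset_left c0 x Hx0) as [h1 h2]. split; auto. intros z a b; eapply HA; eauto. }
  assert (LL : forall y, le y x -> seg A y x -> le l y).
  { intros y Hyx Hs. assert (Ay : A y) by (apply Hs; auto using le_refl).
    destruct (HA' y Ay) as [c [Hc Hyc]]. destruct (iset_left c y Hyc) as [h1 h2].
    eapply le_trans; [|apply h1]. apply Hlmin. apply in_map; auto. split.
    eapply le_trans; eauto.
    intros z a b. destruct (le_or_lt z y) as [k|k]. eapply HA; eauto.
    apply Hs; auto using lt_le. }
  destruct (classic (forall z, le x z -> A z)) as [Hunb|Hb].
  - exists (fun z => le l z). split; [|auto].
    split; [|split].
    + exists (CR T l). split; [exact I|]. intro; simpl; tauto.
    + intros z Hz. destruct (le_or_lt z x) as [k|k]. apply Hsl; auto. apply Hunb, lt_le; auto.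
    + intros K HK HJK HKA z Hz. assert (Kx : K x) by (apply HJK; auto).
      destruct (le_or_lt z x) as [k|k].
      * apply LL; auto. intros y a b. apply HKA. apply (ci_conv K z x y); auto.
      * apply le_trans with x; auto using lt_le.
  - apply not_all_ex_not in Hb. destruct Hb as [z0 Hz0].
    apply imply_to_and in Hz0. destruct Hz0 as [Hxz0 Hnz0].
    assert (NCR : forall c y, In c cs -> iset lt c y -> le x y -> seg A x y -> forall i, c <> CR T i).
    { intros c y Hc Hy Hxy Hs i ->. apply Hnz0.
      destruct (le_or_lt z0 y) as [k|k].
      - apply Hs; auto.
      - eapply HA; eauto. simpl in *. eapply le_trans; eauto using lt_le. }
    destruct (list_max (fun e => le x e /\ seg A x e) (map rgt cs)) as [r [_ [[Hxr Hsr] Hrmax]]].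
    { exists (rgt c0). split. apply in_map; auto.
      assert (Hs0 : seg A x x) by (intros y a b; rewrite (le_antisym _ _ b a); auto).
      destruct (iset_right c0 x Hx0 (NCR c0 x Hc0 Hx0 (le_refl x) Hs0)) as [h1 h2].
      split; auto. intros z a b; eapply HA; eauto. }
    assert (RR : forall y, le x y -> seg A x y -> le y r).
    { intros y Hxy Hs. assert (Ay : A y) by (apply Hs; auto using le_refl).
      destruct (HA' y Ay) as [c [Hc Hyc]].
      destruct (iset_right c y Hyc (NCR c y Hc Hyc Hxy Hs)) as [h1 h2].
      eapply le_trans; [apply h1|]. apply Hrmax. apply in_map; auto. split.
      eapply le_trans; eauto.
      intros z a b. destruct (le_or_lt z y) as [k|k]. apply Hs; auto. eapply HA; eauto. apply h2; auto using lt_le. }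
    exists (iset lt (CC T l r)). split; [|simpl; auto].
    split; [|split].
    + exists (CC T l r). split; [eapply le_trans; eauto|]. intro; tauto.
    + intros z [H1 H2]. destruct (le_or_lt z x) as [k|k]. apply Hsl; auto. apply Hsr; auto using lt_le.
    + intros K HK HJK HKA z Hz. assert (Kx : K x) by (apply HJK; simpl; auto).
      simpl; split.
      * destruct (le_or_lt z x) as [k|k].
        -- apply LL; auto. intros y a b. apply HKA. apply (ci_conv K z x y); auto.
        -- apply le_trans with x; auto using lt_le.
      * destruct (le_or_lt x z) as [k|k].
        -- apply RR; auto. intros y a b. apply HKA. apply (ci_conv K x z y); auto.
        -- apply le_trans with x; auto using lt_le.
Qed.

Lemma mem_char A x : Pfci lt A ->
  (A x <-> exists l, lends lt A l /\ le l x /\ forall r, rends lt A r -> le l r -> le x r).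
Proof.
  intros PA; split.
  - intros Hx. destruct (comp_exists A x PA Hx) as [J [HJ Jx]].
    destruct HJ as [HJc [HJA HJmax]] eqn:E.
    destruct (ci_min J HJc) as [m [Jm Hm]].
    exists m. split; [exists J; split; auto|split; auto].
    intros r [J' [HJ' [J'r Hr]]] Hmr.
    destruct (le_or_lt x r) as [k|k]; auto. exfalso.
    destruct HJ' as [HJ'c [HJ'A HJ'max]].
    destruct (ci_min J' HJ'c) as [m' [Jm' Hm']].
    assert (Jr : J r) by (apply (ci_conv J m x r); auto using lt_le).
    assert (Kc : closed_interval lt (iset lt (CC T m' x))).
    { exists (CC T m' x). split. apply le_trans with r; auto using lt_le. intro; tauto. }
    assert (J'x : J' x).
    { apply (HJ'max _ Kc).
      - intros y Hy. simpl. split; auto. apply le_trans with r; auto using lt_le.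
      - intros y [H1 H2]. destruct (le_or_lt y r) as [k'|k'].
        + apply HJ'A. apply (ci_conv J' m' r y); auto.
        + apply HJA. apply (ci_conv J r x y); auto using lt_le.
      - simpl; split; auto using le_refl. apply le_trans with r; auto using lt_le. }
    apply (lt_not_le r x); auto.
  - intros [l [[J [[HJc [HJA HJmax]] [Jl Hl]]] [Hlx Hr]]].
    apply HJA. destruct HJc as [c [Hc Hs]] eqn:E.
    destruct c as [i j|i|j]; simpl in *.
    + assert (Jj : J j) by (apply Hs; simpl; auto using le_refl).
      apply (ci_conv J l j x); auto. apply Hr; auto.
      exists J. split. split; auto. split; auto. intros y Hy; apply Hs in Hy; apply Hy.
    + apply Hs. simpl. apply Hs in Jl. simpl in Jl. apply le_trans with l; auto.
    + assert (Jj : J j) by (apply Hs; simpl; auto using le_refl).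
      apply (ci_conv J l j x); auto. apply Hr; auto.
      exists J. split. split; auto. split; auto. intros y Hy; apply Hs in Hy; apply Hy.
Qed.

Definition Tsing t := FAnd (FNot (FEq t TBot)) (FEq (TMin t) t).
Definition Tsub t u := FEq (TInter t u) t.
Definition Tle t u := FEq (TMin (TUnion t u)) t.
Definition Fmem a b := FEx 5 (FAnd (Tsing (TVar 5)) (FAnd (Tsub (TVar 5) (TVar a))
  (FAnd (Tle (TVar 5) (TVar 4)) (FAll 6 (FImp (FAnd (Tsing (TVar 6))
     (FAnd (Tsub (TVar 6) (TVar b)) (Tle (TVar 5) (TVar 6)))) (Tle (TVar 4) (TVar 6))))))).
Definition phi := FAll 4 (FImp (Tsing (TVar 4)) (FImp (Fmem 0 1) (Fmem 2 3))).

Lemma sing_sem e t : sat lt zero e (Tsing t) <-> exists a, forall y, teval lt zero e t y <-> y = a.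
Proof.
  simpl. unfold seteq, s_min, s_bot. split.
  - intros [Hne Hm]. destruct (classic (exists a, teval lt zero e t a)) as [[a Ha]|h].
    + exists a. intros y; split; [|intros ->; auto].
      intros Hy. apply le_antisym.
      * apply Hm in Hy. apply Hy; auto.
      * apply Hm in Ha. apply Ha; auto.
    + exfalso; apply Hne. intros x; split; [intros Hx; apply h; eauto|tauto].
  - intros [a Ha]. split.
    + intros h. apply (h a). apply Ha; auto.
    + intros x; split; [tauto|]. intros Hx; split; auto.
      intros y Hy. apply Ha in Hx; apply Ha in Hy; subst; apply le_refl.
Qed.

Lemma sub_sem e t u a : (forall y, teval lt zero e t y <-> y = a) ->
  (sat lt zero e (Tsub t u) <-> teval lt zero e u a).
Proof.
  intros Ha. simpl; unfold seteq, s_inter; split.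
  - intros h. apply h. apply Ha; auto.
  - intros h x; split; [tauto|]. intros Hx; split; auto. apply Ha in Hx; subst; auto.
Qed.

Lemma le_sem e t u a b : (forall y, teval lt zero e t y <-> y = a) ->
  (forall y, teval lt zero e u y <-> y = b) ->
  (sat lt zero e (Tle t u) <-> le a b).
Proof.
  intros Ha Hb. simpl; unfold seteq, s_min, s_union; split.
  - intros h. assert (H1 : teval lt zero e t a) by (apply Ha; auto).
    apply h in H1. apply H1. right; apply Hb; auto.
  - intros h x; split.
    + intros [[Hx|Hx] Hm].
      * auto.
      * apply Hb in Hx; subst. apply Ha. apply le_antisym; auto. apply Hm. left; apply Ha; auto.
    + intros Hx; split; [left; auto|]. apply Ha in Hx; subst.
      intros y [Hy|Hy]; [apply Ha in Hy|apply Hb in Hy]; subst; auto using le_refl.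
Qed.

Lemma fin1 (a : T) : finite (fun y => y = a).
Proof. exists [a]. intros y; simpl; split; [intros ->; auto|intros [->|[]]; auto]. Qed.

Lemma mem_sem e a b x : Nat.eqb a 5 = false -> Nat.eqb a 6 = false ->
  Nat.eqb b 5 = false -> Nat.eqb b 6 = false ->
  (forall y, e 4 y <-> y = x) ->
  (sat lt zero e (Fmem a b) <-> exists l, e a l /\ le l x /\ forall r, e b r -> le l r -> le x r).
Proof.
  intros a5 a6 b5 b6 Hx. unfold Fmem. cbn [sat]. split.
  - intros [L [FL [HL1 [HL2 [HL3 HL4]]]]].
    apply sing_sem in HL1. destruct HL1 as [l Hl].
    exists l. split; [|split].
    + apply (sub_sem _ _ _ _ Hl) in HL2. simpl in HL2. unfold upd in HL2. rewrite a5 in HL2. exact HL2.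
    + refine (proj1 (le_sem _ _ _ _ _ Hl _) HL3). intros y; simpl; unfold upd; simpl; apply Hx.
    + intros r Hr Hlr. specialize (HL4 (fun y => y = r) (fin1 r)).
      assert (Hr' : forall y, teval lt zero (upd (upd e 5 L) 6 (fun y => y = r)) (TVar 6) y <-> y = r).
      { intros y; simpl; unfold upd; simpl. tauto. }
      assert (Hl' : forall y, teval lt zero (upd (upd e 5 L) 6 (fun y => y = r)) (TVar 5) y <-> y = l).
      { intros y; simpl; unfold upd; simpl. apply Hl. }
      assert (Hx' : forall y, teval lt zero (upd (upd e 5 L) 6 (fun y => y = r)) (TVar 4) y <-> y = x).
      { intros y; simpl; unfold upd; simpl. apply Hx. }
      apply (proj1 (le_sem _ _ _ _ _ Hx' Hr')). apply HL4. split; [|split].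
      * apply sing_sem; eauto.
      * apply (proj2 (sub_sem _ _ _ _ Hr')). simpl; unfold upd; rewrite b6, b5; auto.
      * apply (proj2 (le_sem _ _ _ _ _ Hl' Hr')); auto.
  - intros [l [Hla [Hlx Hr]]]. exists (fun y => y = l). split; [apply fin1|].
    assert (Hl : forall y, teval lt zero (upd e 5 (fun y => y = l)) (TVar 5) y <-> y = l).
    { intros y; simpl; unfold upd; simpl; tauto. }
    split; [|split; [|split]].
    + apply sing_sem; eauto.
    + apply (proj2 (sub_sem _ _ _ _ Hl)). simpl; unfold upd; rewrite a5; auto.
    + refine (proj2 (le_sem _ _ _ _ x Hl _) Hlx). intros y; simpl; unfold upd; simpl; apply Hx.
    + intros R FR [HR1 [HR2 HR3]]. apply sing_sem in HR1. destruct HR1 as [r Hr'].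
      assert (Hl' : forall y, teval lt zero (upd (upd e 5 (fun y => y = l)) 6 R) (TVar 5) y <-> y = l).
      { intros y; simpl; unfold upd; simpl. tauto. }
      assert (Hx' : forall y, teval lt zero (upd (upd e 5 (fun y => y = l)) 6 R) (TVar 4) y <-> y = x).
      { intros y; simpl; unfold upd; simpl. apply Hx. }
      apply (proj2 (le_sem _ _ _ _ _ Hx' Hr')). apply Hr.
      * apply (sub_sem _ _ _ _ Hr') in HR2. simpl in HR2; unfold upd in HR2; rewrite b6, b5 in HR2; auto.
      * apply (le_sem _ _ _ _ _ Hl' Hr') in HR3; auto.
Qed.
End Pf.

Theorem proposition6p3 (T : Type) (lt : T -> T -> Prop) (zero : T)
  (HI : is_dlo0 lt zero) :
  exists phi : form,
    forall A B : pset T, Pfci lt A -> Pfci lt B ->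
      (subset A B <->
       sat lt zero (env4 (lends lt A) (rends lt A) (lends lt B) (rends lt B)) phi).
Proof.
  exists phi. intros A B PA PB. unfold phi. cbn [sat]. split.
  - intros Hsub X FX HX. apply (sing_sem T lt zero HI) in HX. destruct HX as [x Hx].
    intros HmA.
    apply (mem_sem T lt zero HI _ 0 1 x) in HmA; auto.
    apply (mem_sem T lt zero HI _ 2 3 x); auto.
    simpl in HmA |- *. unfold upd in *; simpl in *.
    apply (mem_char T lt zero HI B x PB). apply Hsub.
    apply (mem_char T lt zero HI A x PA). exact HmA.
  - intros H x Ax.
    assert (Hx : forall y, upd (env4 (lends lt A) (rends lt A) (lends lt B) (rends lt B)) 4 (fun y => y = x) 4 y <-> y = x).
    { intros y; unfold upd; simpl; tauto. }
    specialize (H (fun y => y = x) (fin1 T x)).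
    assert (HB := H ltac:(apply (sing_sem T lt zero HI); exists x; simpl; unfold upd; simpl; tauto)
       ltac:(apply (mem_sem T lt zero HI _ 0 1 x); auto; unfold upd; simpl;
             apply (mem_char T lt zero HI A x PA); exact Ax)).
    apply (mem_sem T lt zero HI _ 2 3 x) in HB; auto.
    unfold upd in HB; simpl in HB.
    apply (mem_char T lt zero HI B x PB). exact HB.
Qed.
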